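(* Let $n \ge 2$ be even and $N\ge 1$ an integer. Let $\tau \in S_{N+3n-3}$ have size at most $N$. Then every permutation in $S_{N+3n-3}$ with the same cycle type as $\tau$ can be obtained from $\tau$ by successive conjugation by $n$-crossing permutations over $S_{N+3n-3}$; that is, it equals $g\tau g^{-1}$ for some $g$ that is a product of $n$-crossing permutations over $S_{N+3n-3}$.
   Context: For integers $2\le n\le m$ and $1 \le j \le m-n+1$, the $n$-crossing permutation $\pi_j\in S_m$ is $\pi_j=(j,\,j+n-1)(j+1,\,j+n-2)\cdots$, i.e. the involution sending $i \mapsto 2j+n-1-i$ for $j\le i\le j+n-1$ and fixing all other elements of $\{1,\dots,m\}$. The $n$-crossing permutations over $S_m$ are $\pi_1,\dots,\pi_{m-n+1}$. The size of a permutation is the number of points it does not fix (the number of distinct entries in its cycle notation after dropping $1$-cycles). *)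

(* Defs.v *)
From mathcomp Require Import all_boot all_fingroup.
Set Implicit Arguments. Unset Strict Implicit. Unset Printing Implicit Defensive.
Local Open Scope group_scope.

(* Points {1,...,m} are represented 0-indexed as 'I_m.+1 (we always have m >= 1
   in the application; here the ambient size is m.+1). *)

(* The n-crossing permutation with (0-indexed) start j, written, as in the
   paper, as the product of transpositions (j, j+n-1)(j+1, j+n-2)...,
   i.e. the involution i |-> 2j+n-1-i on [j, j+n-1], identity elsewhere.
   (The transpositions are disjoint, so their order is irrelevant.) *)
Definition crossing (m n j : nat) : {perm 'I_m.+1} :=
  \prod_(k < n./2) tperm (inord (j + k) : 'I_m.+1) (inord (j + n - 1 - k)).

Definition crossings (m n : nat) : {set {perm 'I_m.+1}} :=
  [set crossing m n j | j : 'I_m.+2 & j + n <= m.+1].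

(* Cycle type: the multiset of cycle lengths (including fixed points). *)
Definition cycle_type (T : finType) (s : {perm T}) : seq nat :=
  [seq #|X| | X : {set T} <- enum (porbits s)].

Definition same_cycle_type (T : finType) (s t : {perm T}) : bool :=
  perm_eq (cycle_type s) (cycle_type t).

Definition nonfix_size (T : finType) (s : {perm T}) : nat :=
  #|[set x | s x != x]|.

(* Main.v *)
Require Import Defs.
From mathcomp Require Import all_boot all_fingroup.
From mathcomp Require Import zify.
Set Implicit Arguments. Unset Strict Implicit. Unset Printing Implicit Defensive.
Local Open Scope group_scope.

Section Cross.
Variables (m n j : nat).
Hypothesis hjn : j + n <= m.+1.

Lemma prod_tp_val (K : nat) (i : 'I_m.+1) : K <= n./2 ->
  val ((\prod_(k < K) tperm (inord (j + k) : 'I_m.+1) (inord (j + n - 1 - k))) i)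
  = if ((j <= i) && (i < j + K)) || ((j + n - K <= i) && (i < j + n))
    then 2 * j + n - 1 - i else i.
Proof.
elim: K => [|K IH] hK.
  rewrite big_ord0 perm1.
  case: ifP => //; lia.
have hK' : K < n./2 by [].
have hn2 : K.*2 < n by move: hK'; lia.
rewrite big_ord_recr /= permM.
set P := \prod_(k < K) _. set y := P i.
move: (IH (ltnW hK')); rewrite -/P -/y => Hy.
have ha : val (inord (j + K) : 'I_m.+1) = j + K by apply: inordK; lia.
have hb : val (inord (j + n - 1 - K) : 'I_m.+1) = j + n - 1 - K by apply: inordK; lia.
case: tpermP => [Hya|Hyb|Hna Hnb].
- rewrite hb; move: Hy; rewrite Hya ha => Hy.
  case: ifP Hy; case: ifP => //; lia.
- rewrite ha; move: Hy; rewrite Hyb hb => Hy.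
  case: ifP Hy; case: ifP => //; lia.
- have Hna' : val y != j + K by rewrite -ha; apply/eqP => /val_inj /Hna.
  have Hnb' : val y != j + n - 1 - K by rewrite -hb; apply/eqP => /val_inj /Hnb.
  rewrite -/y Hy; move: Hna' Hnb'; rewrite Hy.
  case: ifP; case: ifP => //; lia.
Qed.

Lemma crossing_val (i : 'I_m.+1) : ~~ odd n ->
  val (crossing m n j i) = if (j <= i) && (i < j + n) then 2 * j + n - 1 - i else i.
Proof.
move=> hev; rewrite /crossing prod_tp_val //.
have : n = (n./2).*2 by rewrite -[n in LHS]odd_double_half (negbTE hev).
move=> hn; case: ifP; case: ifP => //; lia.
Qed.
End Cross.

Section Q.
Variable T : finType.
Implicit Types a b c x y z : T.

Lemma tpE a b z : tperm a b z = if z == a then b else if z == b then a else z.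
Proof. by case: tpermP => [->|->|/eqP/negbTE-> /eqP/negbTE->]; rewrite ?eqxx //; case: eqP. Qed.

Ltac decide_eqs :=
  repeat (match goal with
   | |- context [?u == ?v] => is_var u; is_var v; case: (u =P v) => [?|?]
   end; subst => /=; try done; try (exfalso; by [])).

Ltac tsolve := apply/permP => ?; rewrite ?permM ?tpE; decide_eqs.

Definition Q a b c : {perm T} := tperm a b * tperm b c.

Lemma Q_rot a b c : a != b -> b != c -> a != c -> Q a b c = Q b c a.
Proof. move=> /eqP? /eqP? /eqP?; rewrite /Q; tsolve. Qed.

Lemma Q_inv a b c : (Q a b c)^-1 = Q c b a.
Proof. by rewrite /Q invMg !tpermV tpermC [tperm b a]tpermC. Qed.

Lemma Q_id1 x y p q : x != y -> x != p -> x != q -> y != p -> y != q -> p != q ->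
  Q x p q = Q x y q * (Q x y p)^-1.
Proof. rewrite Q_inv => /eqP? /eqP? /eqP? /eqP? /eqP? /eqP?; rewrite /Q; tsolve. Qed.

Lemma Q_id3 x p q r : x != p -> x != q -> x != r -> p != q -> q != r -> p != r ->
  Q p q r = Q x p q * Q x q r.
Proof. move=> /eqP? /eqP? /eqP? /eqP? /eqP? /eqP?; rewrite /Q; tsolve. Qed.

Lemma QJ a b c g : (Q a b c) ^ g = Q (g a) (g b) (g c).
Proof. by rewrite /Q conjMg !tpermJ. Qed.

Variable G : {group {perm T}}.

Lemma Grot a b c : a != b -> b != c -> a != c -> Q a b c \in G -> Q b c a \in G.
Proof. by move=> ? ? ? ; rewrite Q_rot. Qed.

Lemma Grev a b c : Q a b c \in G -> Q c b a \in G.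
Proof. by move=> H; rewrite -Q_inv groupV. Qed.

Definition good (V : {set T}) := forall a b c, a \in V -> b \in V -> c \in V ->
  a != b -> b != c -> a != c -> Q a b c \in G.

Lemma good_sub (V W : {set T}) : V \subset W -> good W -> good V.
Proof. by move=> /subsetP sVW gW a b c aV bV cV; apply: gW; apply: sVW. Qed.

Lemma good_conj (V : {set T}) g : good V -> g \in G -> good (g @: V).
Proof.
move=> gV gG _ _ _ /imsetP[a aV ->] /imsetP[b bV ->] /imsetP[c cV ->].
rewrite !(inj_eq perm_inj) => ab bc ac.
by rewrite -QJ groupJ //; apply: gV.
Qed.

Lemma star (V : {set T}) x y : x != y -> x \in V -> y \in V ->
  (forall z, z \in V -> x != z -> y != z -> Q x y z \in G) -> good V.
Proof.
move=> xy xV yV Hs.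
have Hx p q : p \in V -> q \in V -> x != p -> x != q -> p != q -> Q x p q \in G.
  move=> pV qV xp xq pq.
  have [e|yp] := eqVneq y p; first by subst p; apply: Hs.
  have [e|yq] := eqVneq y q.
    subst q; rewrite Q_rot //; try by rewrite eq_sym.
    by apply: Grev; apply: Hs.
  by rewrite (Q_id1 xy) // groupM ?groupV //; apply: Hs.
move=> a b c aV bV cV ab bc ac.
have [e|xa] := eqVneq x a; first by subst a; apply: Hx.
have [e|xb] := eqVneq x b.
  subst b.
  rewrite Q_rot //; apply: Hx => //; by rewrite eq_sym.
have [e|xc] := eqVneq x c.
  subst c.
  rewrite -Q_rot //; try by rewrite eq_sym.
  by apply: Hx.
by rewrite (Q_id3 xa) // groupM //; apply: Hx.
Qed.


Lemma good_union (V W : {set T}) x y : good V -> good W -> x != y ->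
  x \in V -> y \in V -> x \in W -> y \in W -> good (V :|: W).
Proof.
move=> gV gW xy xV yV xW yW; apply: (star xy); rewrite ?inE ?xV ?yV //.
move=> z; rewrite inE => /orP[zV|zW] xz yz; [exact: gV | exact: gW].
Qed.

Lemma good3 a b c : a != b -> b != c -> a != c -> Q a b c \in G -> good [set a; b; c].
Proof.
move=> ab bc ac H; apply: (star ab); rewrite ?inE ?eqxx ?orbT //.
by move=> z; rewrite !inE => /orP[/orP[/eqP->|/eqP->]|/eqP->]; rewrite ?eqxx.
Qed.

Lemma pair_in a b c d : good setT -> a != b -> c != d -> tperm a b * tperm c d \in G.
Proof.
move=> gT ab cd.
have gQ p q r : p != q -> q != r -> p != r -> Q p q r \in G by move=> *; apply: gT; rewrite ?inE.
have [e|bc] := eqVneq b c.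
  subst c; have [e|ad] := eqVneq a d.
    by subst d; rewrite tpermC tperm2 group1.
  by apply: gQ.
have [e|ac] := eqVneq a c.
  subst c; have [e|bd] := eqVneq b d.
    by subst d; rewrite tperm2 group1.
  by rewrite tpermC; apply: gQ; rewrite // eq_sym.
have [e|bd] := eqVneq b d.
  by subst d; rewrite [tperm c b]tpermC; apply: gQ; rewrite // eq_sym.
have [e|ad] := eqVneq a d.
  by subst d; rewrite tpermC [tperm c a]tpermC; apply: gQ; rewrite // eq_sym.
have -> : tperm a b * tperm c d = Q a b c * Q b c d.
  by rewrite /Q !mulgA -[tperm a b * tperm b c * tperm b c]mulgA tperm2 mulg1.
by rewrite groupM //; apply: gQ.
Qed.

Lemma even_in h : good setT -> ~~ odd_perm h -> h \in G.
Proof.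
move=> gT; have [ts -> dts] := prod_tpermP h; rewrite odd_perm_prod //.
have [n] := ubnP (size ts); elim: n ts dts => // n IH [|t1 [|t2 ts]] //=.
- by move=> _ _ _; rewrite big_nil group1.
- move=> /and3P[d1 d2 dts] hs hodd.
  rewrite !big_cons mulgA groupM //; first by apply: pair_in.
  by apply: IH => //; move: hs hodd => /=; rewrite ?negbK //; lia.
Qed.

End Q.

Section App.
Variables (m n : nat).
Hypotheses (hn2 : 2 <= n) (hev : ~~ odd n) (hm : 3 * n - 3 <= m).

Local Notation T := ('I_m.+1).
Local Notation r j := (crossing m n j).
Definition pt (i : nat) : T := inord i.

Lemma pt_val i : i < m.+1 -> val (pt i) = i.
Proof. by move=> h; rewrite /pt; apply: inordK. Qed.

Lemma Q_val a b c (i : T) : a < m.+1 -> b < m.+1 -> c < m.+1 -> a != b -> b != c -> a != c ->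
  val (Q (pt a) (pt b) (pt c) i) =
  if val i == a then c else if val i == b then a else if val i == c then b else val i.
Proof.
move=> ha hb hc ab bc ac.
case: i => i hi /=.
rewrite /Q permM !tpE.
have ei u : u < m.+1 -> (Ordinal hi == pt u) = (i == u).
  by move=> hu; rewrite -(inj_eq val_inj) /= pt_val.
have ep u v : u < m.+1 -> v < m.+1 -> (pt u == pt v) = (u == v).
  by move=> hu hv; rewrite -(inj_eq val_inj) !pt_val.
rewrite !ei //.
case: (i =P a) => [e|ne1] /=.
  by subst i; rewrite ep // eqxx pt_val.
case: (i =P b) => [e|ne2] /=.
  by subst i; rewrite ep // (negbTE ab) ep // (negbTE ac) pt_val.
rewrite !ei //.
case: (i =P b) => [e|_] //=.
case: (i =P c) => [e|_] //=; by rewrite pt_val.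
Qed.

Lemma three_cycle :
  (r 0 * r (n - 1)) ^+ 2 = Q (pt 0) (pt (2 * n - 2)) (pt (n - 1)).
Proof.
apply/permP => i; apply: val_inj.
rewrite Q_val; try lia.
rewrite expgS expg1 !permM !crossing_val //; try lia.
have := ltn_ord i.
repeat case: ifP => /=; try lia.
Qed.


Definition GG := <<crossings m n>>%G.

Lemma r_in j : j + n <= m.+1 -> r j \in GG.
Proof.
move=> h; apply: mem_gen; apply/imsetP; exists (inord j : 'I_m.+2).
  by rewrite inE inordK //; lia.
by rewrite inordK //; lia.
Qed.

Definition S (P : pred nat) : {set T} := [set i : T | P (val i)].

Lemma r_fix j (x : nat) : j + n <= m.+1 -> x < m.+1 -> ~~ ((j <= x) && (x < j + n)) ->
  r j (pt x) = pt x.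
Proof.
move=> hj hx hnw; apply: val_inj; rewrite crossing_val // !pt_val //.
by rewrite (negbTE hnw).
Qed.

Lemma grow (P P' : pred nat) j x y : j + n <= m.+1 -> good GG (S P) ->
  x != y -> x < m.+1 -> y < m.+1 -> P x -> P y ->
  ~~ ((j <= x) && (x < j + n)) -> ~~ ((j <= y) && (y < j + n)) ->
  (forall i, i < m.+1 -> P' i -> P i \/ ((j <= i) && (i < j + n) /\ P (2 * j + n - 1 - i))) ->
  good GG (S P').
Proof.
move=> hj gP xy hx hy Px Py nx ny HP'.
apply: (@good_sub _ _ _ (S P :|: r j @: S P)).
  apply/subsetP => -[i hi]; rewrite inE /= => /(HP' _ hi) [Pi|[hw Pi']].
    by rewrite inE inE Pi.
  rewrite inE; apply/orP; right; apply/imsetP; exists (pt (2 * j + n - 1 - i)).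
    by rewrite inE pt_val //; lia.
  apply: val_inj; rewrite crossing_val // pt_val /=; last by lia.
  case/andP: hw => h1 h2; rewrite ifT; [lia | apply/andP; split; lia].
have xyp : pt x != pt y by rewrite -(inj_eq val_inj) !pt_val.
apply: (good_union gP (good_conj gP (r_in hj)) xyp).
- by rewrite inE pt_val.
- by rewrite inE pt_val.
- by rewrite -(r_fix hj hx nx); apply: imset_f; rewrite inE pt_val.
- by rewrite -(r_fix hj hy ny); apply: imset_f; rewrite inE pt_val.
Qed.


Definition P0 : pred nat := fun i => (i == 0) || (i == 2 * n - 2) || (i == n - 1).
Definition E (t : nat) : pred nat := fun i => P0 i || (~~ odd i && (2 <= i) && (i <= 2 * t)).
Definition F1 : pred nat := fun i => E (n - 2) i || (odd i && (i <= n - 1)).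
Definition D (t : nat) : pred nat := fun i => i <= t.

Lemma subS (P P' : pred nat) : (forall i, i < m.+1 -> P' i -> P i) -> S P' \subset S P.
Proof. by move=> H; apply/subsetP => -[i hi]; rewrite !inE /=; apply: H. Qed.

Lemma good_P0 : good GG (S P0).
Proof.
have h3 : Q (pt 0) (pt (2 * n - 2)) (pt (n - 1)) \in GG.
  by rewrite -three_cycle groupX // groupM // r_in //; lia.
have ne u v : u < m.+1 -> v < m.+1 -> u != v -> pt u != pt v.
  by move=> hu hv; rewrite -(inj_eq val_inj) !pt_val.
have g3 : good GG [set pt 0; pt (2 * n - 2); pt (n - 1)].
  by apply: good3 h3; apply: ne; lia.
apply: (good_sub _ g3).
apply/subsetP => -[i hi]; rewrite inE /= /P0 => H.
have -> : Ordinal hi = pt i by apply: val_inj; rewrite /= pt_val.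
by rewrite !inE; case/orP: H => [/orP[]|] /eqP ->; rewrite eqxx ?orbT.
Qed.

Lemma good_E t : t <= n - 2 -> good GG (S (E t)).
Proof.
elim: t => [|t IH] ht.
  apply: (good_sub _ good_P0); apply: subS => i _; rewrite /E.
  by case/orP => // /andP[/andP[_ a] b]; lia.
apply: (@grow (E t) (E t.+1) t.+1 0 (2 * n - 2)).
- lia.
- by apply: IH; lia.
- lia.
- lia.
- lia.
- by rewrite /E /P0 eqxx.
- by rewrite /E /P0 eqxx orbT.
- lia.
- lia.
move=> i hi; rewrite {1}/E => /orP[H0|/andP[/andP[Hev H2] H3]].
  by left; rewrite /E H0.
have [e|ne] := eqVneq i (2 * t.+1)%N.
  right; split; first by apply/andP; split; lia.
  have -> : 2 * t.+1 + n - 1 - i = n - 1 by lia.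
  by rewrite /E /P0 eqxx !orbT.
left; rewrite /E; apply/orP; right.
rewrite Hev H2 /=; lia.
Qed.

Lemma good_F2 : good GG (S (fun i => i <= 2 * n - 2)).
Proof.
have [n2|n4] := leqP n 2.
  apply: (good_sub _ good_P0); apply: subS => i _ hi.
  have e : n = 2 by lia.
  by rewrite /P0 e; move: hi; rewrite e; case: i => [|[|[|i]]].
have gF1 : good GG (S F1).
  apply: (@grow (E (n - 2)) F1 1 0 (2 * n - 2)).
  - lia.
  - by apply: good_E; lia.
  - lia.
  - lia.
  - lia.
  - by rewrite /E /P0 eqxx.
  - by rewrite /E /P0 eqxx orbT.
  - lia.
  - lia.
  move=> i hi; rewrite {1}/F1 => /orP[H|/andP[Ho Hle]]; first by left.
  right; split; first by apply/andP; split; lia.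
  rewrite /E; apply/orP; right; apply/andP; split; [apply/andP; split|]; lia.
apply: (@grow F1 _ (n - 2) 0 (2 * n - 2)).
- lia.
- exact: gF1.
- lia.
- lia.
- lia.
- by rewrite /F1 /E /P0 eqxx.
- by rewrite /F1 /E /P0 eqxx orbT.
- lia.
- lia.
move=> i hi Hi; case: (boolP (odd i)) => Ho.
  case: (leqP i (n - 1)) => Hl.
    by left; rewrite /F1 Ho Hl orbT.
  right; split; first by apply/andP; split; lia.
  rewrite /F1 /E; apply/orP; left; apply/orP; right.
  apply/andP; split; [apply/andP; split|]; lia.
left; rewrite /F1 /E; apply/orP; left.
have [e|ne] := eqVneq i (2 * n - 2)%N; first by rewrite /P0 e eqxx orbT.
have [e0|ne0] := eqVneq i 0; first by rewrite /P0 e0.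
apply/orP; right; rewrite Ho /=; apply/andP; split; lia.
Qed.

Lemma good_D d : 2 * n - 2 + d <= m -> good GG (S (D (2 * n - 2 + d))).
Proof.
elim: d => [|d IH] hd.
  by rewrite addn0; apply: good_F2.
apply: (@grow (D (2 * n - 2 + d)) _ (2 * n - 2 + d + 2 - n) 0 1%N).
- lia.
- by apply: IH; lia.
- by [].
- lia.
- lia.
- by rewrite /D.
- by rewrite /D; lia.
- lia.
- lia.
move=> i hi; rewrite /D => Hi.
have [e|ne] := eqVneq i (2 * n - 2 + d.+1)%N.
  by right; split; [apply/andP; split; lia | lia].
by left; lia.
Qed.

Lemma good_all : good GG setT.
Proof.
have := good_D (d := m - (2 * n - 2)) ltac:(lia).
apply: good_sub; apply/subsetP => -[i hi] _; rewrite inE /D /=; lia.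
Qed.

End App.

Section Conj.
Variable T : finType.
Implicit Types (s t h : {perm T}) (A B : {set T}) (x z : T).

Definition cnt s (l : nat) B := #|[set z in B | #|porbit s z| == l]|.

Lemma porbitJ s h z : porbit (s ^ h) (h z) = h @: porbit s z.
Proof.
apply/setP => y; apply/porbitP/imsetP => [[i ->]|[w /porbitP[i ->] ->]].
  by exists ((s ^+ i) z); [apply: mem_porbit | rewrite -conjXg permJ].
by exists i; rewrite -conjXg permJ.
Qed.

Lemma card_porbitJ s h z : #|porbit (s ^ h) (h z)| = #|porbit s z|.
Proof. by rewrite porbitJ card_imset //; apply: perm_inj. Qed.

Lemma fixA_notin h A z : (forall a, a \in A -> h a = a) -> (h z \in A) = (z \in A).
Proof.
move=> hA; apply/idP/idP => [hz|zA]; last by rewrite hA.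
have := hA _ hz; move/perm_inj => e; by rewrite -e.
Qed.

Lemma cnt_conj s h A l : (forall a, a \in A -> h a = a) ->
  cnt (s ^ h) l (~: A) = cnt s l (~: A).
Proof.
move=> hA; rewrite /cnt.
have -> : [set z in ~: A | #|porbit (s ^ h) z| == l] = h @: [set z in ~: A | #|porbit s z| == l].
  apply/setP => z; apply/idP/imsetP => [|[w]].
    rewrite !inE => /andP[zA hz]; exists (h^-1 z); last by rewrite permKV.
    rewrite !inE -(fixA_notin _ hA) permKV zA /=.
    by rewrite -(card_porbitJ s h) permKV.
  by rewrite !inE => /andP[wA hw] ->; rewrite (fixA_notin _ hA) wA card_porbitJ.
by rewrite card_imset //; apply: perm_inj.
Qed.

Lemma closed_back (p : {perm T}) A z : (forall a, a \in A -> p a \in A) -> p z \in A -> z \in A.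
Proof.
move=> hA pz.
have e : p @: A = A.
  apply/eqP; rewrite eqEcard card_imset; last exact: perm_inj.
  rewrite leqnn andbT; apply/subsetP => _ /imsetP[a aA ->]; exact: hA.
by move: pz; rewrite -{1}e mem_imset //; apply: perm_inj.
Qed.

Lemma cnt_sum u l : cnt u l setT = \sum_(c <- cycle_type u) c * (c == l).
Proof.
rewrite /cycle_type big_map big_enum /cnt -sum1_card.
rewrite (partition_big (porbit u) (mem (porbits u))) /=; last first.
  by move=> z _; apply: imset_f.
apply: eq_bigr => X /imsetP[x _ ->].
rewrite (eq_bigl (fun z => (#|porbit u x| == l) && (z \in porbit u x))); last first.
  move=> z; rewrite !inE /= eq_porbit_mem.
  case zX: (z \in porbit u x); rewrite ?andbF ?andbT //.
  by rewrite -eq_porbit_mem in zX; rewrite (eqP zX).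
have [e|ne] := eqVneq #|porbit u x| l.
  by rewrite muln1 (eq_bigl (mem (porbit u x))) // sum1_card.
by rewrite muln0 big_pred0.
Qed.

Lemma cnt_total s t l : same_cycle_type s t -> cnt s l setT = cnt t l setT.
Proof. by move=> H; rewrite !cnt_sum; apply: perm_big. Qed.


Lemma conj_app s p z : (s ^ p) z = p (s (p^-1 z)).
Proof. by rewrite -{1}(permKV p z) permJ. Qed.

Lemma agree_conj s t h A : (forall a, a \in A -> s a = t a) -> (forall a, a \in A -> t a \in A) ->
  (forall a, a \in A -> h a = a) -> forall a, a \in A -> (s ^ h) a = t a.
Proof. by move=> sA tA hA a aA; rewrite -{1}(hA a aA) permJ sA // hA // tA. Qed.

Lemma iter_notin t A x i : (forall a, a \in A -> t a \in A) -> x \notin A -> iter i t x \notin A.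
Proof.
move=> tA xA; elim: i => //= i IH; apply: contra IH; exact: closed_back tA.
Qed.

Lemma iter_inj u x i i' : i < #|porbit u x| -> i' < #|porbit u x| ->
  iter i u x = iter i' u x -> i = i'.
Proof.
move=> hi hi' e; apply/eqP.
have U := uniq_traject_porbit u x.
rewrite -(nth_uniq x _ _ U) ?size_traject // !nth_traject //; exact/eqP.
Qed.

Lemma iter_agree s t x j : (forall i, i < j -> s (iter i t x) = iter i.+1 t x) ->
  forall i, i <= j -> iter i s x = iter i t x.
Proof.
move=> H; elim=> [//|i IH] hi /=; rewrite IH ?H //; lia.
Qed.

Lemma path_build s t A x : (forall a, a \in A -> s a = t a) -> (forall a, a \in A -> t a \in A) ->
  x \notin A -> #|porbit s x| = #|porbit t x| ->
  forall j, j < #|porbit t x| -> exists h, [/\ (forall a, a \in A -> h a = a),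
    #|porbit (s ^ h) x| = #|porbit t x| &
    forall i, i < j -> (s ^ h) (iter i t x) = iter i.+1 t x].
Proof.
move=> sA tA xA hl; elim=> [|j IH] hj.
  by exists 1; split => //; [move=> a _; rewrite perm1 | rewrite conjg1].
have [h [hA hl' hi]] := IH (ltnW hj).
set s' := s ^ h in hl' hi.
have s'A := agree_conj sA tA hA.
have ag := iter_agree hi.
set u := iter j t x; set v := iter j.+1 t x; set w := s' u.
have ew : w = iter j.+1 s' x by rewrite /w /u /= ag.
have wv_cases : w = v \/ w != v by case: eqVneq; [left|right].
case: wv_cases => [ewv|nwv].
  exists h; split => // i; rewrite ltnS leq_eqVlt => /orP[/eqP->|/hi //].
  by rewrite -/u -/s' -/w ewv.
have uA : u \notin A by apply: iter_notin.
have vA : v \notin A by apply: iter_notin.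
have wA : w \notin A.
  apply: contra uA; apply: closed_back => a aA; rewrite s'A // tA //.
have fixp i : i <= j -> tperm w v (iter i t x) = iter i t x.
  move=> hij; apply: tpermD.
    rewrite -ag //; apply/eqP => e; rewrite ew in e.
    move/iter_inj: e; rewrite hl'; lia.
  apply/eqP => e; move/iter_inj: e; lia.
exists (h * tperm w v); split.
- move=> a aA; rewrite permM hA // tpermD //.
    by apply/eqP => e; move: wA; rewrite e aA.
  by apply/eqP => e; move: vA; rewrite e aA.
- rewrite conjgM -/s'.
  have := card_porbitJ s' (tperm w v) x.
  by rewrite (fixp 0 (leq0n _)) /= => ->.
- move=> i hij; rewrite conjgM -/s' conj_app tpermV fixp; last by lia.
  move: hij; rewrite ltnS leq_eqVlt => /orP[/eqP->|hij].
    by rewrite -/u -/w tpermL.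
  by rewrite hi // fixp.
Qed.


Lemma porbit_agree s t (X : {set T}) z : (forall a, a \in X -> s a = t a) -> (forall a, a \in X -> t a \in X) ->
  z \in X -> porbit s z = porbit t z.
Proof.
move=> sX tX zX.
have it i : (s ^+ i) z = (t ^+ i) z /\ (t ^+ i) z \in X.
  elim: i => [|i [IH1 IH2]]; first by rewrite !expg0 !perm1.
  by rewrite !expgSr !permM IH1 sX // tX.
apply/setP => y; apply/porbitP/porbitP => -[i ->]; exists i; by case: (it i).
Qed.

Lemma main_ind t : forall k A s, #|~: A| <= k ->
  (forall a, a \in A -> s a = t a) -> (forall a, a \in A -> t a \in A) ->
  (forall l, cnt s l (~: A) = cnt t l (~: A)) -> exists h, t = s ^ h.
Proof.
elim=> [|k IH] A s hk sA tA hc.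
  exists 1; rewrite conjg1; apply/permP => z; rewrite sA //.
  by move: hk; rewrite leqn0 cards_eq0 => /eqP /setP /(_ z); rewrite !inE => /negbFE.
case: (pickP (mem (~: A))) => [x xA | none]; last first.
  exists 1; rewrite conjg1; apply/permP => z; rewrite sA //.
  by move: (none z); rewrite /= inE => /negbFE.
have xA' : x \notin A by move: xA; rewrite /= inE.
set l := #|porbit t x|.
have : 0 < cnt s l (~: A).
  by rewrite hc card_gt0; apply/set0Pn; exists x; rewrite !inE xA' /=.
rewrite card_gt0 => /set0Pn [y]; rewrite !inE => /andP[yA /eqP hy].
set p := tperm x y.
have pA a : a \in A -> p a = a.
  move=> aA; apply: tpermD.
    by apply/eqP => e; move: xA'; rewrite e aA.
  by apply/eqP => e; move: yA; rewrite e aA.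
set s1 := s ^ p.
have s1A := agree_conj sA tA pA.
have hc1 l' : cnt s1 l' (~: A) = cnt t l' (~: A) by rewrite cnt_conj.
have hl1 : #|porbit s1 x| = l.
  by have := card_porbitJ s p y; rewrite /p tpermR hy.
have l0 : 0 < l by rewrite lt0n card_porbit_neq0.
have [h [hA hl' hi]] := path_build s1A tA xA' hl1 (j := l.-1) ltac:(lia).
set s' := s1 ^ h in hl' hi.
have s'A := agree_conj s1A tA hA.
have ag := iter_agree hi.
set X := porbit t x.
have tX a : a \in X -> t a \in X.
  by move=> aX; rewrite -(eqP (_ : porbit t a == X)) ?(mem_porbit t 1) ?eq_porbit_mem.
have s'X a : a \in X -> s' a = t a.
  rewrite /X porbit_traject => /trajectP[i hi_l ->].
  have [ilt|ieq] : i < l.-1 \/ i = l.-1 by lia.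
    by rewrite hi.
  have hl'' : l = #|porbit s' x| by rewrite hl'.
  subst i; rewrite -ag // -iterS prednK // [in LHS]hl'' iter_porbit.
  by rewrite ag // -iterS prednK // /l iter_porbit.
set A' := A :|: X.
have XA a : a \in X -> a \notin A.
  rewrite /X porbit_traject => /trajectP[i _ ->]; exact: iter_notin.
suff [h2 e] : exists h2, t = s' ^ h2.
  by exists (p * h * h2); rewrite e !conjgM.
apply: (IH A').
- rewrite -ltnS (leq_trans _ hk) // proper_card //; apply/properP; split.
    by apply/subsetP => z; rewrite !inE negb_or => /andP[].
  by exists x; rewrite !inE ?xA' // negb_or xA' /= negbK /X porbit_id.
- by move=> a; rewrite inE => /orP[/s'A|/s'X].
- by move=> a; rewrite !inE => /orP[/tA ->|/tX ->]; rewrite ?orbT.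
- move=> l'.
  have split_cnt f : cnt f l' (~: A) = cnt f l' (~: A') + #|[set z in X | #|porbit f z| == l']|.
    rewrite /cnt -(cardsID X [set z in ~: A | #|porbit f z| == l']) [in LHS]addnC.
    congr (_ + _); apply: eq_card => z; rewrite !inE.
      by rewrite negb_or; case: (z \in A); case: (z \in X).
    by case zX: (z \in X); rewrite ?andbF ?andbT //= (negbTE (XA _ zX)).
  have eqX : [set z in X | #|porbit s' z| == l'] = [set z in X | #|porbit t z| == l'].
    apply/setP => z; rewrite !inE; case zX: (z \in X) => //=.
    by rewrite (porbit_agree s'X tX zX).
  have := split_cnt s'; have := split_cnt t.
  rewrite /s' cnt_conj // hc1 eqX => ->; lia.
Qed.

Lemma conj_exists s t : same_cycle_type s t -> exists h, t = s ^ h.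
Proof.
move=> H; apply: (@main_ind t #|~: (set0 : {set T})| set0 s) => //.
- by move=> a; rewrite inE.
- by move=> a; rewrite inE.
- by move=> l; rewrite setC0 (cnt_total _ H).
Qed.

End Conj.

Unset Implicit Arguments.

(* S_{N+3n-3} is {perm 'I_(N+3n-4).+1}; note N+3n-3 >= 1. *)
Theorem lemma2p6 (n N : nat) (hn2 : 2 <= n) (hnev : ~~ odd n) (hN : 1 <= N)
  (tau : {perm 'I_(N + 3 * n - 4).+1}) (htau : nonfix_size tau <= N)
  (sigma : {perm 'I_(N + 3 * n - 4).+1}) (hsig : same_cycle_type sigma tau) :
  exists2 g, g \in << crossings (N + 3 * n - 4) n >> &
    sigma = tau ^ g.
Proof.
have hm : 3 * n - 3 <= N + 3 * n - 4 by lia.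
have hsig' : same_cycle_type tau sigma by rewrite /same_cycle_type perm_sym.
have [h eh] := conj_exists hsig'.
have Heven g : ~~ odd_perm g -> g \in << crossings (N + 3 * n - 4) n >>.
  move=> hg; have := even_in (good_all hn2 hnev hm) hg; by [].
case hh: (odd_perm h); last first.
  by exists h => //; apply: Heven; rewrite hh.
set F := [set x | tau x == x].
have cF : 1 < #|F|.
  have := cardsC F; rewrite card_ord.
  have -> : ~: F = [set x | tau x != x] by apply/setP => x; rewrite !inE.
  move: htau; rewrite /nonfix_size; lia.
move/card_gt1P: cF => [a [b [aF bF ab]]].
move: aF bF; rewrite !inE => /eqP ta /eqP tb.
exists (tperm a b * h).
  by apply: Heven; rewrite odd_mul_tperm ab hh.
rewrite conjgM; suff -> : tau ^ tperm a b = tau by [].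
apply/permP => z; rewrite conj_app tpermV.
case: (tpermP a b z) => [->|->|za zb].
- by rewrite tb tpermR.
- by rewrite ta tpermL.
- apply: tpermD; apply/eqP => e.
    by apply: za; apply: (@perm_inj _ tau); rewrite -e ta.
  by apply: zb; apply: (@perm_inj _ tau); rewrite -e tb.
Qed.
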